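(* Let $n,T\ge1$, $p\ge 1$, $\omega\ge 0$, and data $\dot x^j\in\mathbb{R}^n$, $z^j\in\mathbb{R}^{N_A}$, $v^j\in\mathbb{R}^{N_B}$, $j=0,\dots,T-1$, with $p=N_A+N_B$. Define $c_j:=-\omega I_n+\dot x^j(\dot x^j)^\top$, $b_j:=-\begin{bmatrix}z^j\\ v^j\end{bmatrix}(\dot x^j)^\top\in\mathbb{R}^{p\times n}$, $a_j:=\begin{bmatrix}z^j\\ v^j\end{bmatrix}\begin{bmatrix}z^j\\ v^j\end{bmatrix}^\top\in\mathbb{R}^{p\times p}$, and $Z_0:=[z^0\ \cdots\ z^{T-1}]$, $V_0:=[v^0\ \cdots\ v^{T-1}]$. If the matrix $\begin{bmatrix}Z_0\\ V_0\end{bmatrix}\in\mathbb{R}^{p\times T}$ has full row rank, then there exist a symmetric matrix $A_{\mathrm{i}}\in\mathbb{R}^{p\times p}$, a matrix $B_{\mathrm{i}}\in\mathbb{R}^{p\times n}$ and scalars $\tau_0,\dots,\tau_{T-1}$ satisfying $$\begin{bmatrix}-I-\sum_{j=0}^{T-1}\tau_jc_j & B_{\mathrm{i}}^\top-\sum_{j=0}^{T-1}\tau_jb_j^\top & B_{\mathrm{i}}^\top\\ B_{\mathrm{i}}-\sum_{j=0}^{T-1}\tau_jb_j & A_{\mathrm{i}}-\sum_{j=0}^{T-1}\tau_ja_j & 0\\ B_{\mathrm{i}} & 0 & -A_{\mathrm{i}}\end{bmatrix}\preceq 0,\qquad A_{\mathrm{i}}\succ 0,\qquad \tau_j\ge 0\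 (j=0,\dots,T-1),$$ i.e., the optimization program ''minimize $-\log\det A_{\mathrm{i}}$ subject to these constraints'' is feasible.
   Context: $\succeq,\preceq$ denote the Loewner order on symmetric matrices; $I$ denotes identity matrices of appropriate size. *)

(* Defs.v *)
From mathcomp Require Import all_boot all_order all_algebra.
Set Implicit Arguments. Unset Strict Implicit. Unset Printing Implicit Defensive.
Import Order.TTheory GRing.Theory Num.Theory.
Local Open Scope ring_scope.

Definition nsd (R : realFieldType) (k : nat) (M : 'M[R]_k) : Prop :=
  M^T = M /\ forall x : 'cV[R]_k, (x^T *m M *m x) 0 0 <= 0.

Definition pd (R : realFieldType) (k : nat) (M : 'M[R]_k) : Prop :=
  M^T = M /\ forall x : 'cV[R]_k, x != 0 -> 0 < (x^T *m M *m x) 0 0.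

Definition block3 (R : realFieldType) (n p : nat)
  (M11 : 'M[R]_n) (M12 : 'M[R]_(n, p)) (M13 : 'M[R]_(n, p))
  (M21 : 'M[R]_(p, n)) (M22 : 'M[R]_p) (M23 : 'M[R]_p)
  (M31 : 'M[R]_(p, n)) (M32 : 'M[R]_p) (M33 : 'M[R]_p) : 'M[R]_(n + p + p) :=
  col_mx (col_mx (row_mx (row_mx M11 M12) M13)
                 (row_mx (row_mx M21 M22) M23))
         (row_mx (row_mx M31 M32) M33).

Definition zv (R : realFieldType) (NA NB : nat)
  (z : 'cV[R]_NA) (v : 'cV[R]_NB) : 'cV[R]_(NA + NB) := col_mx z v.

Definition c_j (R : realFieldType) (n : nat) (omega : R) (xd : 'cV[R]_n) : 'M[R]_n :=
  - (omega%:M) + xd *m xd^T.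
Definition b_j (R : realFieldType) (n p : nat) (w : 'cV[R]_p) (xd : 'cV[R]_n)
  : 'M[R]_(p, n) := - (w *m xd^T).
Definition a_j (R : realFieldType) (p : nat) (w : 'cV[R]_p) : 'M[R]_p := w *m w^T.

Definition datamx (R : realFieldType) (k T : nat) (z : 'I_T -> 'cV[R]_k)
  : 'M[R]_(k, T) := \matrix_(i < k, j < T) z j i 0.

(* Main.v *)
Require Import Defs.
From mathcomp Require Import all_boot all_order all_algebra.
From mathcomp Require Import ring lra.
Import Order.TTheory GRing.Theory Num.Theory.
Set Implicit Arguments. Unset Strict Implicit. Unset Printing Implicit Defensive.
Local Open Scope ring_scope.


Definition dot (R : realFieldType) k (a b : 'cV[R]_k) : R := (a^T *m b) 0 0.

Lemma dotE (R : realFieldType) k (a b : 'cV[R]_k) : dot a b = \sum_i a i 0 * b i 0.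
Proof. by rewrite /dot mxE; apply: eq_bigr => i _; rewrite mxE. Qed.

Lemma dotC (R : realFieldType) k (a b : 'cV[R]_k) : dot a b = dot b a.
Proof. by rewrite !dotE; apply: eq_bigr => i _; rewrite mulrC. Qed.

Lemma dot_ge0 (R : realFieldType) k (a : 'cV[R]_k) : 0 <= dot a a.
Proof. by rewrite dotE; apply: sumr_ge0 => i _; rewrite -expr2 sqr_ge0. Qed.

Lemma cs (R : realFieldType) k (a b : 'cV[R]_k) : dot a b ^+ 2 <= dot a a * dot b b.
Proof.
have [lam0|lamp] := eqVneq (dot a a) 0.
  have a0 : forall i, a i 0 = 0.
    move=> i; have P0 : forall j, predT j -> 0 <= a j 0 * a j 0.
      by move=> j _; rewrite -expr2 sqr_ge0.
    have := psumr_eq0P P0; rewrite -dotE => /(_ lam0 i isT) /eqP.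
    by rewrite mulf_eq0 orbb => /eqP.
  rewrite lam0 mul0r dotE big1 ?expr0n //= => i _; by rewrite a0 mul0r.
have lp : 0 < dot a a by rewrite lt0r lamp dot_ge0.
set l := dot a a; set m := dot a b.
have H : 0 <= \sum_i (l * b i 0 - m * a i 0) ^+ 2 by apply: sumr_ge0 => i _; exact: sqr_ge0.
have E : \sum_i (l * b i 0 - m * a i 0) ^+ 2 = l * (l * dot b b - m ^+ 2).
  have F i : (l * b i 0 - m * a i 0) ^+ 2 =
     l^+2 * (b i 0 * b i 0) - (2 * l * m) * (a i 0 * b i 0) + m ^+ 2 * (a i 0 * a i 0) by ring.
  under eq_bigr => i _ do rewrite F.
  rewrite !big_split /= sumrN -!mulr_sumr -!dotE -/l -/m; ring.
rewrite E in H; move: H; rewrite pmulr_rge0 // subr_ge0 => H.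
exact: H.
Qed.

Definition qf (R : realFieldType) k l (y : 'cV[R]_k) (M : 'M[R]_(k,l)) (u : 'cV[R]_l) : R :=
  (y^T *m M *m u) 0 0.

Lemma qfD (R : realFieldType) k l y (M1 M2 : 'M[R]_(k,l)) u : qf y (M1 + M2) u = qf y M1 u + qf y M2 u.
Proof. by rewrite /qf mulmxDr mulmxDl mxE. Qed.
Lemma qfN (R : realFieldType) k l y (M : 'M[R]_(k,l)) u : qf y (- M) u = - qf y M u.
Proof. by rewrite /qf mulmxN mulNmx mxE. Qed.
Lemma qfB (R : realFieldType) k l y (M1 M2 : 'M[R]_(k,l)) u : qf y (M1 - M2) u = qf y M1 u - qf y M2 u.
Proof. by rewrite qfD qfN. Qed.
Lemma qfZ (R : realFieldType) k l y a (M : 'M[R]_(k,l)) u : qf y (a *: M) u = a * qf y M u.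
Proof. by rewrite /qf -scalemxAr -scalemxAl mxE. Qed.
Lemma qf0 (R : realFieldType) k l y u : qf y (0 : 'M[R]_(k,l)) u = 0.
Proof. by rewrite /qf mulmx0 mul0mx mxE. Qed.
Lemma qf_sum (R : realFieldType) k l T (F : 'I_T -> 'M[R]_(k,l)) y u :
  qf y (\sum_j F j) u = \sum_j qf y (F j) u.
Proof. by rewrite /qf mulmx_sumr mulmx_suml summxE. Qed.
Lemma qf_sumZ (R : realFieldType) k l T (t : 'I_T -> R) (F : 'I_T -> 'M[R]_(k,l)) y u :
  qf y (\sum_j t j *: F j) u = \sum_j t j * qf y (F j) u.
Proof. by rewrite qf_sum; apply: eq_bigr => j _; rewrite qfZ. Qed.
Lemma qf_scalar (R : realFieldType) k y a (u : 'cV[R]_k) : qf y a%:M u = a * dot y u.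
Proof. by rewrite /qf mul_mx_scalar -scalemxAl mxE. Qed.
Lemma qf1 (R : realFieldType) k y (u : 'cV[R]_k) : qf y 1%:M u = dot y u.
Proof. by rewrite /qf mulmx1. Qed.
Lemma qf_outer (R : realFieldType) k l (y a : 'cV[R]_k) (b u : 'cV[R]_l) :
  qf y (a *m b^T) u = dot y a * dot b u.
Proof. by rewrite /qf /dot !mulmxA -(mulmxA (y^T *m a)) [in LHS]mxE big_ord1. Qed.
Lemma qf_tr (R : realFieldType) k l y (M : 'M[R]_(k,l)) u : qf y M^T u = qf u M y.
Proof.
rewrite /qf; have -> : y^T *m M^T *m u = (u^T *m M *m y)^T.
  by rewrite !trmx_mul !trmxK mulmxA.
by rewrite mxE.
Qed.

Lemma RC (R : realFieldType) m1 m2 n1 n2 (a : 'M[R]_(m1,n1)) (b : 'M[R]_(m2,n1)) (c : 'M[R]_(m1,n2)) (d : 'M[R]_(m2,n2)) :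
  row_mx (col_mx a b) (col_mx c d) = col_mx (row_mx a c) (row_mx b d).
Proof. by rewrite -block_mxEh block_mxEv. Qed.

Lemma block3_tr (R : realFieldType) n p M11 M12 M13 M21 M22 M23 M31 M32 M33 :
  (@block3 R n p M11 M12 M13 M21 M22 M23 M31 M32 M33)^T =
  block3 M11^T M21^T M31^T M12^T M22^T M32^T M13^T M23^T M33^T.
Proof. by rewrite /block3 !tr_col_mx !tr_row_mx !RC. Qed.

Lemma block3_qf (R : realFieldType) n p M11 M12 M13 M21 M22 M23 M31 M32 M33 y u s :
  qf (col_mx (col_mx y u) s) (@block3 R n p M11 M12 M13 M21 M22 M23 M31 M32 M33)
     (col_mx (col_mx y u) s) =
  qf y M11 y + qf y M12 u + qf y M13 s + qf u M21 y + qf u M22 u + qf u M23 s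
  + qf s M31 y + qf s M32 u + qf s M33 s.
Proof.
rewrite /qf /block3 !tr_col_mx -mulmxA !mul_col_mx !mul_row_col !mulmxDr !mulmxA.
rewrite !mxE; ring.
Qed.

Lemma sumc (R : realFieldType) n T (y : 'cV[R]_n) om (x : 'I_T -> 'cV_n) t :
  \sum_j t * qf y (c_j om (x j)) y = \sum_j t * (-(om * dot y y) + dot y (x j) * dot (x j) y).
Proof. by apply: eq_bigr => j _; rewrite /c_j qfD qfN qf_scalar qf_outer. Qed.
Lemma sumbt (R : realFieldType) n p T (y : 'cV[R]_n) (u : 'cV[R]_p) w (x : 'I_T -> 'cV_n) t :
  \sum_j t * qf y (b_j (w j) (x j))^T u = \sum_j t * -(dot u (w j) * dot (x j) y).
Proof. by apply: eq_bigr => j _; rewrite qf_tr /b_j qfN qf_outer. Qed.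
Lemma sumb (R : realFieldType) n p T (y : 'cV[R]_n) (u : 'cV[R]_p) w (x : 'I_T -> 'cV_n) t :
  \sum_j t * qf u (b_j (w j) (x j)) y = \sum_j t * -(dot u (w j) * dot (x j) y).
Proof. by apply: eq_bigr => j _; rewrite /b_j qfN qf_outer. Qed.
Lemma suma (R : realFieldType) p T (u : 'cV[R]_p) (w : 'I_T -> 'cV_p) t :
  \sum_j t * qf u (a_j (w j)) u = \sum_j t * (dot u (w j) * dot (w j) u).
Proof. by apply: eq_bigr => j _; rewrite /a_j qf_outer. Qed.
Lemma suma' (R : realFieldType) p T (u : 'cV[R]_p) (w : 'I_T -> 'cV_p) :
  \sum_j qf u (a_j (w j)) u = \sum_j (dot u (w j) * dot (w j) u).
Proof. by apply: eq_bigr => j _; rewrite /a_j qf_outer. Qed.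

Theorem mainTheorem2 (R : realFieldType) (n T NA NB : nat) (omega : R)
  (xd : 'I_T -> 'cV[R]_n) (z : 'I_T -> 'cV[R]_NA) (v : 'I_T -> 'cV[R]_NB) :
  (1 <= n)%N -> (1 <= T)%N -> (1 <= NA + NB)%N -> 0 <= omega ->
  \rank (col_mx (datamx z) (datamx v)) = (NA + NB)%N ->
  exists (Ai : 'M[R]_(NA + NB)) (Bi : 'M[R]_(NA + NB, n)) (tau : 'I_T -> R),
    Ai^T = Ai /\
    nsd (block3
      (- 1%:M - \sum_(j < T) tau j *: c_j omega (xd j))
      (Bi^T - \sum_(j < T) tau j *: (b_j (zv (z j) (v j)) (xd j))^T)
      Bi^T
      (Bi - \sum_(j < T) tau j *: b_j (zv (z j) (v j)) (xd j))
      (Ai - \sum_(j < T) tau j *: a_j (zv (z j) (v j)))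
      0
      Bi
      0
      (- Ai)) /\
    pd Ai /\
    (forall j : 'I_T, 0 <= tau j).
Proof.
move=> hn hT hp homega hrank.
set w := fun j => zv (z j) (v j).
set K := \sum_(j < T) (omega + dot (xd j) (xd j)).
have K0 : 0 <= K by apply: sumr_ge0 => j _; apply: addr_ge0 => //; exact: dot_ge0.
set t := (1 + K)^-1.
have t0 : 0 < t by rewrite invr_gt0; lra.
have tK : t * K <= 1.
  by rewrite /t ler_pdivrMl ?mulr1; lra.
exists ((t/2) *: \sum_j a_j (w j)), 0, (fun _ => t).
have asym : forall j, (a_j (w j))^T = a_j (w j) by move=> j; rewrite /a_j trmx_mul trmxK.
have Asym : ((t/2) *: \sum_j a_j (w j))^T = (t/2) *: \sum_j a_j (w j).
  by rewrite linearZ /= linear_sum /=; congr (_ *: _); apply: eq_bigr => j _; rewrite asym.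
split; first exact: Asym.
split.
- split; last first.
  move=> x; rewrite -[x]vsubmxK -[usubmx x]vsubmxK.
  set y := usubmx (usubmx x); set u := dsubmx (usubmx x); set s := dsubmx x.
  rewrite -[(_ *m _ *m _) 0 0]/(qf _ _ _) block3_qf.
  rewrite !qfB !qfN !qf0 !trmx0 !qf0 !qfZ !qf_sumZ qf_sum qf1.
  rewrite sumc sumbt sumb suma suma' qf_sum suma'.
  set N := dot y y.
  have N0 : 0 <= N by exact: dot_ge0.
  have S4p : 0 <= \sum_j dot s (w j) * dot (w j) s.
    by apply: sumr_ge0 => j _; rewrite (dotC (w j)) -expr2 sqr_ge0.
  set S1 := \sum_j _ * (- _ + _).
  set S2 := \sum_j t * - (dot u _ * _).
  set S3 := \sum_j dot u (w j) * dot (w j) u.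
  set S3' := \sum_j t * _.
  set S4 := \sum_j dot s (w j) * dot (w j) s.
  have E : S1 + 2 * S2 - t / 2 * S3 + S3' = \sum_j (t * (-(omega * N) + dot y (xd j) * dot (xd j) y)
     + 2 * (t * -(dot u (w j) * dot (xd j) y)) - t / 2 * (dot u (w j) * dot (w j) u)
     + t * (dot u (w j) * dot (w j) u)).
    rewrite !big_split /= sumrN -!mulr_sumr /S1 /S2 /S3 /S3' -!mulr_sumr /w; ring.
  have L : \sum_j -(t * (omega + dot (xd j) (xd j)) * N) <= S1 + 2 * S2 - t / 2 * S3 + S3'.
    rewrite E; apply: ler_sum => j _.
    have c := cs (xd j) y.
    rewrite (dotC y (xd j)) (dotC (w j) u).
    set al := dot (xd j) y in c *; set be := dot u (w j).
    have h1 : 0 <= al * al + dot (xd j) (xd j) * N - 2 * (be * al) + be * be / 2.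
      have : 0 <= (al - be / 2) ^+ 2 by exact: sqr_ge0.
      rewrite -/N in c; nra.
    have h2 := mulr_ge0 (ltW t0) h1.
    nra.
  have LE : \sum_j -(t * (omega + dot (xd j) (xd j)) * N) = -(t * K * N).
    by rewrite sumrN -mulr_suml -mulr_sumr.
  have h3 : t * K * N <= N.
    have h5 : 0 <= 1 - t * K by lra.
    have := mulr_ge0 h5 N0; nra.
  rewrite LE in L.
  have h4 : 0 <= t / 2 * S4 by apply: mulr_ge0 => //; lra.
  lra.
    rewrite block3_tr; congr block3.
    + rewrite linearB /= linearN /= tr_scalar_mx linear_sum /=; congr (_ - _).
      by apply: eq_bigr => j _; rewrite linearZ /= /c_j linearD /= linearN /= tr_scalar_mx trmx_mul trmxK.
    + rewrite linearB /= linear_sum /=; congr (_ - _).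
      by apply: eq_bigr => j _; rewrite linearZ.
    + rewrite linearB /= trmxK linear_sum /=; congr (_ - _).
      by apply: eq_bigr => j _; rewrite linearZ /= trmxK.
    + rewrite linearB /= Asym linear_sum /=; congr (_ - _).
      rewrite linear_sum; apply: eq_bigr => j _; by rewrite linearZ /= asym.
    + by rewrite trmx0.
    + by rewrite trmxK.
    + by rewrite trmx0.
    + by rewrite linearN /= Asym.
split; last by move=> j; exact: ltW.
split; first exact: Asym.
move=> u u0; rewrite -[(_ *m _ *m _) 0 0]/(qf _ _ _) qfZ qf_sum suma'.
have P0 : forall j, predT j -> 0 <= dot u (w j) * dot (w j) u.
  by move=> j _; rewrite (dotC (w j)) -expr2 sqr_ge0.
apply: mulr_gt0; first lra.
rewrite lt0r; apply/andP; split; last by apply: sumr_ge0.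
apply/eqP => H0.
have hz j : dot u (w j) = 0.
  have := psumr_eq0P P0 H0 (isT : predT j).
  by rewrite (dotC (w j)) => /eqP; rewrite mulf_eq0 orbb => /eqP.
have hW : u^T *m col_mx (datamx z) (datamx v) = 0.
  apply/matrixP => i j; rewrite [RHS]mxE; transitivity (dot u (w j)); last exact: hz.
  rewrite mxE dotE; apply: eq_bigr => k _; rewrite !mxE (ord1 i); congr (_ * _).
  by case: (split k) => l; rewrite !mxE.
have rf : row_free (col_mx (datamx z) (datamx v)) by rewrite /row_free hrank.
have : u^T = 0^T by rewrite trmx0; apply: (row_free_inj rf); rewrite /= hW mul0mx.
by move/trmx_inj => u00; rewrite u00 eqxx in u0.
Qed.
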